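(* Let $G$ be a just infinite group that is not virtually abelian, let $Y$ be a finite set, let $H\le G^Y$ be an infra-direct product, and let $U\subseteq Y$ be minimal such that the restriction of $\psi_U$ to $H$, $H\to G^U$, is injective. Then for every finite index subgroup $L\le H$, $U$ is also minimal such that the restriction of $\psi_U$ to $L$, $L\to G^U$, is injective.
   Context: $G^Y$ is the direct product of copies of $G$ indexed by $Y$; for $y\in Y$, $\psi_y$ is the projection onto the $y$-th coordinate and for $U\subseteq Y$, $\psi_U=(\psi_u)_{u\in U}:G^Y\to G^U$. $H\le G^Y$ is an infra-direct product if $\psi_y(H)$ has finite index in $G$ for every $y\in Y$. A group is just infinite if it is infinite and every proper quotient is finite. *)

(* Defs.v *)
From Stdlib Require Import List FunctionalExtensionality.
From mathcomp Require Import all_boot.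
Set Implicit Arguments. Unset Strict Implicit. Unset Printing Implicit Defensive.

Record grp := Grp {
  gT :> Type;
  gmul : gT -> gT -> gT;
  ginv : gT -> gT;
  gone : gT;
  gmulA : forall x y z, gmul x (gmul y z) = gmul (gmul x y) z;
  gmul1 : forall x, gmul gone x = x;
  gmulr1 : forall x, gmul x gone = x;
  gmulV : forall x, gmul (ginv x) x = gone;
  gmulrV : forall x, gmul x (ginv x) = gone
}.

Definition pow_grp (G : grp) (Y : Type) : grp.
Proof.
refine (@Grp (Y -> gT G) (fun f g y => gmul (f y) (g y))
  (fun f y => ginv (f y)) (fun _ => gone G) _ _ _ _ _);
  intros; apply functional_extensionality; intro i.
- apply gmulA. - apply gmul1. - apply gmulr1. - apply gmulV. - apply gmulrV.
Defined.

Definition subgroup (G : grp) (H : G -> Prop) : Prop :=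
  H (gone G) /\ (forall x y, H x -> H y -> H (gmul x y)) /\
  (forall x, H x -> H (ginv x)).

(* K <= H and K has finite index in H: finitely many left cosets of K
   cover H. *)
Definition finite_index (G : grp) (K H : G -> Prop) : Prop :=
  (forall x, K x -> H x) /\
  exists s : list (gT G), forall h, H h ->
    exists2 x, In x s & exists k, K k /\ h = gmul x k.

Definition full (G : grp) : G -> Prop := fun _ => True.

Definition normal (G : grp) (N : G -> Prop) : Prop :=
  subgroup N /\ forall g n, N n -> N (gmul (gmul (ginv g) n) g).

Definition infinite_grp (G : grp) : Prop :=
  ~ exists s : list (gT G), forall g : gT G, In g s.

(* Just infinite: infinite, and every proper quotient G/N (N nontrivial
   normal subgroup) is finite, i.e. N has finite index in G. *)
Definition just_infinite (G : grp) : Prop :=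
  infinite_grp G /\
  forall N : G -> Prop, normal N -> (exists n, N n /\ n <> gone G) ->
    finite_index N (@full G).

Definition virtually_abelian (G : grp) : Prop :=
  exists A : G -> Prop, subgroup A /\ finite_index A (@full G) /\
    forall a b, A a -> A b -> gmul a b = gmul b a.

Definition proj_image (G : grp) (Y : Type) (H : pow_grp G Y -> Prop) (y : Y)
  : G -> Prop := fun g => exists h, H h /\ h y = g.

Definition infra_direct (G : grp) (Y : Type) (H : pow_grp G Y -> Prop) : Prop :=
  subgroup H /\ forall y, finite_index (proj_image H y) (@full G).

Definition psi_inj_on (G : grp) (Y : finType) (H : pow_grp G Y -> Prop)
  (U : {set Y}) : Prop :=
  forall h h' : pow_grp G Y, H h -> H h' ->
    (forall u, u \in U -> h u = h' u) -> h = h'.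

Definition minimal_inj (G : grp) (Y : finType) (H : pow_grp G Y -> Prop)
  (U : {set Y}) : Prop :=
  psi_inj_on H U /\ forall V : {set Y}, V \proper U -> ~ psi_inj_on H V.

(* Main.v *)
Require Import Defs.
From mathcomp Require Import all_boot.
From Stdlib Require Import List Classical FunctionalExtensionality.
Set Implicit Arguments. Unset Strict Implicit. Unset Printing Implicit Defensive.

Section GroupLemmas.
Variable G : grp.
Implicit Types x y z c d : gT G.

Lemma mulKg x y : gmul (ginv x) (gmul x y) = y.
Proof. by rewrite gmulA gmulV gmul1. Qed.
Lemma mulKVg x y : gmul x (gmul (ginv x) y) = y.
Proof. by rewrite gmulA gmulrV gmul1. Qed.
Lemma mulgKV x y : gmul (gmul x (ginv y)) y = x.
Proof. by rewrite -gmulA gmulV gmulr1. Qed.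
Lemma inv_uniq x y : gmul x y = gone G -> y = ginv x.
Proof. by move=> E; rewrite -(mulKg x y) E gmulr1. Qed.
Lemma invK x : ginv (ginv x) = x.
Proof. by symmetry; apply: inv_uniq; apply: gmulV. Qed.
Lemma invM x y : ginv (gmul x y) = gmul (ginv y) (ginv x).
Proof. by symmetry; apply: inv_uniq; rewrite -gmulA mulKVg gmulrV. Qed.
Lemma inv1 : ginv (gone G) = gone G.
Proof. by symmetry; apply: inv_uniq; apply: gmul1. Qed.
Lemma divKl x g g' : gmul (ginv (gmul (ginv x) g)) (gmul (ginv x) g') = gmul (ginv g) g'.
Proof. by rewrite invM invK -gmulA mulKVg. Qed.

Definition cj x c := gmul (gmul x c) (ginv x).

Lemma cj1g c : cj (gone G) c = c.
Proof. by rewrite /cj gmul1 inv1 gmulr1. Qed.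
Lemma cjg1 x : cj x (gone G) = gone G.
Proof. by rewrite /cj gmulr1 gmulrV. Qed.
Lemma cjM x y c : cj (gmul x y) c = cj x (cj y c).
Proof. by rewrite /cj invM !gmulA. Qed.
Lemma cjgM x c d : cj x (gmul c d) = gmul (cj x c) (cj x d).
Proof. by rewrite /cj !gmulA mulgKV. Qed.
Lemma cjgV x c : cj x (ginv c) = ginv (cj x c).
Proof. by rewrite /cj !invM invK !gmulA. Qed.
Lemma cjK x c : cj (ginv x) (cj x c) = c.
Proof. by rewrite -cjM gmulV cj1g. Qed.
Lemma cj_comm x y : cj x y = y -> gmul x y = gmul y x.
Proof. by move=> E; rewrite -{2}E /cj mulgKV. Qed.

End GroupLemmas.

Inductive gen (G : grp) (a : gT G) : gT G -> Prop :=
| gen1 : gen a (gone G)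
| genc : forall t, gen a (cj t a)
| genM : forall x y, gen a x -> gen a y -> gen a (gmul x y)
| genV : forall x, gen a x -> gen a (ginv x).

Lemma gen_conj (G : grp) (a s n : gT G) : gen a n -> gen a (cj s n).
Proof.
induction 1.
- rewrite cjg1; constructor.
- rewrite -cjM; constructor.
- rewrite cjgM; constructor; auto.
- rewrite cjgV; constructor; auto.
Qed.

Lemma Z_comm (G : grp) (a x y : gT G) :
  (forall t, cj x (cj t a) = cj t a) -> gen a y -> cj x y = y.
Proof.
move=> Hz; induction 1.
- by rewrite cjg1.
- by rewrite Hz.
- by rewrite cjgM IHgen1 IHgen2.
- by rewrite cjgV IHgen.
Qed.

Lemma GL (G : grp) (M C : G -> Prop) (X : Type) (R : G -> X -> Prop) (l : list X) :
  (forall h, M h -> exists d, In d l /\ R h d) ->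
  (forall h h' d, M h -> M h' -> R h d -> R h' d -> C (gmul (ginv h) h')) ->
  exists reps : list (gT G), forall h, M h ->
    exists x, In x reps /\ M x /\ C (gmul (ginv x) h).
Proof.
intros H1 H2.
assert (Hg : forall l', exists reps : list (gT G), forall h, M h ->
   (exists d, In d l' /\ R h d) -> exists x, In x reps /\ M x /\ C (gmul (ginv x) h)).
{ induction l' as [|d l' [reps IH]].
  - exists nil. intros h _ [d [[] _]].
  - destruct (classic (exists hd, M hd /\ R hd d)) as [[hd [Mhd Rhd]]|N].
    + exists (hd :: reps). intros h Mh [d' [[<-|Id] Rh]].
      * exists hd. split; [left; reflexivity|split; [exact Mhd| exact (H2 _ _ _ Mhd Mh Rhd Rh)]].
      * destruct (IH h Mh (ex_intro _ d' (conj Id Rh))) as [x [Ix Hx]].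
        exists x. split; [right; exact Ix| exact Hx].
    + exists reps. intros h Mh [d' [[<-|Id] Rh]].
      * exfalso; apply N; exists h; split; assumption.
      * apply IH; [exact Mh| exists d'; split; assumption]. }
destruct (Hg l) as [reps Hr]. exists reps. intros h Mh. apply Hr; auto.
Qed.

Lemma GL_fi (G : grp) (M C : G -> Prop) : (forall h, C h -> M h) ->
  (exists reps : list (gT G), forall h, M h ->
    exists x, In x reps /\ M x /\ C (gmul (ginv x) h)) -> finite_index C M.
Proof.
intros HCM [reps Hr]. split; [exact HCM|]. exists reps. intros h Mh.
destruct (Hr h Mh) as [x [Ix [_ Cx]]]. exists x; [exact Ix|].
exists (gmul (ginv x) h). split; [exact Cx| symmetry; apply mulKVg].
Qed.

Lemma fi_inter (G : grp) (A B : G -> Prop) : subgroup A -> subgroup B ->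
  finite_index A (@full G) -> finite_index B (@full G) ->
  finite_index (fun x => A x /\ B x) (@full G).
Proof.
intros [A1 [AM AV]] [B1 [BM BV]] [_ [sA hA]] [_ [sB hB]].
apply GL_fi; [intros; exact I|].
apply (GL (M := @full G) (C := fun x => A x /\ B x) (R := fun g (p : gT G * gT G) =>
   A (gmul (ginv (fst p)) g) /\ B (gmul (ginv (snd p)) g)) (l := list_prod sA sB)).
- intros h _. destruct (hA h I) as [x Ix [k [Ak ->]]].
  destruct (hB (gmul x k) I) as [y Iy [k' [Bk' E]]].
  exists (x, y). split; [apply in_prod; assumption|]. simpl. rewrite mulKg.
  split; [exact Ak|]. rewrite E mulKg. exact Bk'.
- intros h h' [x y] _ _ [Ah Bh] [Ah' Bh']. simpl in *. split.
  + rewrite -(divKl x). apply AM; [apply AV|]; assumption.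
  + rewrite -(divKl y). apply BM; [apply BV|]; assumption.
Qed.

Fixpoint tuples {A : Type} (n : nat) (T : list A) : list (list A) :=
  match n with
  | O => nil :: nil
  | S n => flat_map (fun y => List.map (cons y) (tuples n T)) T
  end.

Lemma tuples_in {A : Type} (T d : list A) :
  (forall y, In y d -> In y T) -> In d (tuples (List.length d) T).
Proof.
induction d as [|y d IH]; intros Hd; simpl.
- left; reflexivity.
- apply in_flat_map. exists y. split; [apply Hd; left; reflexivity|].
  apply in_map. apply IH. intros z Hz; apply Hd; right; exact Hz.
Qed.

Lemma map_eq_in {A B : Type} (f f' : A -> B) (l : list A) x :
  List.map f l = List.map f' l -> In x l -> f x = f' x.
Proof.
induction l as [|y l IH]; simpl; [intros _ []|].
intros E [->|I]; injection E; intros; auto.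
Qed.

Section Pow.
Variables (G : grp) (Y : Type).
Lemma pow_mulE (f g : pow_grp G Y) y : gmul f g y = gmul (f y) (g y).
Proof. reflexivity. Qed.
Lemma pow_invE (f : pow_grp G Y) y : ginv f y = ginv (f y).
Proof. reflexivity. Qed.
Lemma pow_oneE y : gone (pow_grp G Y) y = gone G.
Proof. reflexivity. Qed.
Lemma pow_cjE (f g : pow_grp G Y) y : cj f g y = cj (f y) (g y).
Proof. reflexivity. Qed.
Lemma pow_ext (f g : pow_grp G Y) : (forall y, f y = g y) -> f = g.
Proof. exact (@functional_extensionality Y (gT G) f g). Qed.
End Pow.

Theorem lemma3p2 (G : grp) (Y : finType) (H : pow_grp G Y -> Prop)
  (U : {set Y}) :
  just_infinite G -> ~ virtually_abelian G ->
  infra_direct H -> minimal_inj H U ->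
  forall L : pow_grp G Y -> Prop, subgroup L -> finite_index L H ->
    minimal_inj L U.
Proof.
intros [Ginf JI] NVA [Hsub Hfi] [HinjU Hmin] L Lsub [LH [sL HsL]].
split.
{ intros h h' Lh Lh' E. apply HinjU; auto. }
intros V HVU HinjV.
apply (Hmin V HVU).
intros h h' Hh Hh' Hag. apply NNPP; intro Hne.
destruct Hsub as [H1 [HM HV]].
set k0 := gmul (ginv h) h'.
have Hk0 : H k0 by apply HM; [apply HV|].
have Vk0 : forall v, v \in V -> k0 v = gone G.
{ intros v Hv. by rewrite /k0 pow_mulE pow_invE Hag // gmulV. }
have [u Hu] : exists u, k0 u <> gone G.
{ apply NNPP; intro Nu. apply Hne.
  rewrite -(mulKVg h h'). fold k0.
  have -> : k0 = gone (pow_grp G Y).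
  { apply pow_ext; intro y. apply NNPP; intro Ny. apply Nu; exists y; exact Ny. }
  symmetry; apply gmulr1. }
set a := k0 u.
set K := fun k : pow_grp G Y => H k /\ forall v, v \in V -> k v = gone G.
have [sK HsK] : exists sK : list (gT (pow_grp G Y)), forall k, K k -> In k sK.
{ destruct (GL (M := K) (C := fun k => k = gone _)
     (R := fun k x => L (gmul (ginv x) k)) (l := sL)) as [reps Hr].
  - intros k [Hk _]. destruct (HsL k Hk) as [x Ix [k' [Lk' ->]]].
    exists x. split; [exact Ix|]. rewrite mulKg; exact Lk'.
  - intros k k' x [Hk Vk] [Hk' Vk'] Lk Lk'. apply HinjV.
    + rewrite -(divKl x). destruct Lsub as [L1 [LM LV]]. apply LM; [apply LV|]; assumption.
    + exact (proj1 Lsub).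
    + intros v Hv. by rewrite pow_mulE pow_invE Vk // Vk' // inv1 gmul1.
  - exists reps. intros k Kk. destruct (Hr k Kk) as [x [Ix [_ E]]].
    rewrite -(mulKVg x k) E gmulr1. exact Ix. }
set P := proj_image H u.
destruct (Hfi u) as [_ [sP HsP]].
have orbF : forall p, P p -> In (cj p a) (List.map (fun k => k u) sK).
{ intros p [hp [Hhp <-]].
  have Kk' : K (cj hp k0).
  { split.
    - rewrite /cj. apply HM; [apply HM; assumption| apply HV; assumption].
    - intros v Hv. by rewrite pow_cjE Vk0 // cjg1. }
  rewrite /a -pow_cjE. apply (in_map (fun k : pow_grp G Y => k u)). apply HsK. exact Kk'. }
destruct (GL (M := P) (C := fun k => cj k a = a) (R := fun p f => cj p a = f)
   (l := List.map (fun k => k u) sK)) as [repsP HrP].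
- intros p Pp. exists (cj p a). split; [apply orbF; exact Pp| reflexivity].
- intros p p' f _ _ E E'. by rewrite cjM E' -E cjK.
set W := flat_map (fun x => List.map (fun r => gmul x r) repsP) sP.
have classW : forall g, exists w, In w W /\ cj g a = cj w a.
{ intro g. destruct (HsP g I) as [x Ix [p [Pp ->]]].
  destruct (HrP p Pp) as [r [Ir [_ Er]]].
  have Epr : cj p a = cj r a by rewrite -{2}Er -cjM mulKVg.
  exists (gmul x r). split.
  - apply in_flat_map. exists x. split; [exact Ix| apply in_map; exact Ir].
  - by rewrite !cjM Epr. }
set T := List.map (fun w => cj w a) W.
set Z := fun g : gT G => forall t, cj g (cj t a) = cj t a.
have Zsub : subgroup Z.
{ split; [|split].
  - intro t. apply cj1g.
  - intros x y Zx Zy t. by rewrite cjM Zy Zx.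
  - intros x Zx t. by rewrite -{1}(Zx t) cjK. }
have Zfi : finite_index Z (@full G).
{ apply GL_fi; [intros; exact I|].
  apply (GL (M := @full G) (C := Z) (R := fun g d => d = List.map (cj g) T)
           (l := tuples (List.length T) T)).
  - intros g _. exists (List.map (cj g) T). split; [|reflexivity].
    rewrite -(length_map (cj g) T). apply tuples_in.
    intros y Hy. apply in_map_iff in Hy. destruct Hy as [c [<- Hc]].
    apply in_map_iff in Hc. destruct Hc as [w [<- Hw]].
    rewrite -cjM. destruct (classW (gmul g w)) as [w' [Iw' ->]].
    apply (in_map (fun w0 => cj w0 a)); exact Iw'.
  - intros g g' d _ _ -> E. intro t. destruct (classW t) as [w [Iw ->]].
    have Ec : cj g (cj w a) = cj g' (cj w a).
    { apply (map_eq_in E). apply (in_map (fun w0 => cj w0 a)). exact Iw. }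
    by rewrite cjM -Ec cjK. }
have Nsub : subgroup (gen a).
{ split; [apply gen1| split; [apply genM| apply genV]]. }
have Nn : normal (gen a).
{ split; [exact Nsub|]. intros g n Hn.
  have -> : gmul (gmul (ginv g) n) g = cj (ginv g) n by rewrite /cj invK.
  apply gen_conj; exact Hn. }
have Ga : gen a a by have := genc a (gone G); rewrite cj1g.
have Nfi := JI (gen a) Nn (ex_intro _ a (conj Ga Hu)).
apply NVA. exists (fun x => Z x /\ gen a x). split; [|split].
- destruct Zsub as [Z1 [ZM ZV]]. destruct Nsub as [N1 [NM NV]].
  split; [split; assumption| split].
  + intros x y [? ?] [? ?]; split; auto.
  + intros x [? ?]; split; auto.
- apply fi_inter; assumption.
- intros x y [Zx _] [_ Ny]. apply cj_comm. apply (Z_comm (a:=a)); assumption.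
Qed.
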